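(* Let $H$ be a graph with vertex set $A\cup B\cup\{v\}$, where $A$, $B$, $\{v\}$ are pairwise disjoint, $A$ is an independent set or a clique, $A$ and $B$ are complete to each other, and $v$ has both a neighbour and a non-neighbour in $A$. Let $F$ be a spanning subgraph of $H$ obtained from $H$ by removing some (possibly all) of the edges between $v$ and vertices of $A$. Then $H\xrightarrow{\cap} F$.
   Context: All graphs are finite and simple. For graphs $G_1=(V_1,E_1)$, $G_2=(V_2,E_2)$, $G_1\cap G_2=(V_1\cap V_2, E_1\cap E_2)$. For a graph $G=(V,E)$ and an injective map $\alpha$ on $V$, $G^{\alpha}$ has vertex set $\alpha(V)$ and edge set $\{\{\alpha(v),\alpha(w)\}: \{v,w\}\in E\}$. We write $G\xrightarrow{\cap} H$ if $H=G^{\alpha_1}\cap\cdots\cap G^{\alpha_k}$ for some $k\ge1$ and injective maps $\alpha_1,\dots,\alpha_k$ on $V(G)$. Sets are complete to each other if every vertex of one is adjacent to every vertex of the other. *)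

(* Defs.v *)
From mathcomp Require Import all_boot.
Set Implicit Arguments. Unset Strict Implicit. Unset Printing Implicit Defensive.

Record graph (T : finType) := Graph { gV : {set T}; gE : {set {set T}} }.

Definition simple (T : finType) (G : graph T) : Prop :=
  forall e, e \in gE G ->
    exists x y, [/\ x \in gV G, y \in gV G, x != y & e = [set x; y]].

Definition adj (T : finType) (G : graph T) (x y : T) : bool := [set x; y] \in gE G.

Definition gimage (T : finType) (G : graph T) (alpha : T -> T) : graph T :=
  Graph (alpha @: gV G) [set alpha @: e | e : {set T} in gE G].

(* G -cap-> H : H = G^{a_1} cap ... cap G^{a_k}, k >= 1, a_i injective on V(G) *)
Definition cap_reach (T : finType) (G H : graph T) : Prop :=
  exists (k : nat) (a : 'I_k.+1 -> T -> T),
    (forall i, {in gV G &, injective (a i)}) /\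
    gV H = \bigcap_i gV (gimage G (a i)) /\
    gE H = \bigcap_i gE (gimage G (a i)).

Definition independent (T : finType) (G : graph T) (A : {set T}) : Prop :=
  forall x y, x \in A -> y \in A -> x != y -> ~~ adj G x y.

Definition clique (T : finType) (G : graph T) (A : {set T}) : Prop :=
  forall x y, x \in A -> y \in A -> x != y -> adj G x y.

Definition complete_to (T : finType) (G : graph T) (A B : {set T}) : Prop :=
  forall x y, x \in A -> y \in B -> adj G x y.

(* Main.v *)
Require Import Defs.
From mathcomp Require Import all_boot.
Set Implicit Arguments. Unset Strict Implicit. Unset Printing Implicit Defensive.

Definition sw (T : eqType) (x y z : T) : T :=
  if z == x then y else if z == y then x else z.

Lemma sw_inv (T : eqType) (x y : T) : involutive (sw x y).
Proof.
move=> z; rewrite /sw.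
case: (eqVneq z x) => [->|zx]; first by rewrite eqxx; case: eqVneq.
case: (eqVneq z y) => [->|zy]; first by rewrite eqxx.
by rewrite (negPf zx) (negPf zy).
Qed.

Lemma imset_set2 (T : finType) (f : T -> T) (p q : T) :
  f @: [set p; q] = [set f p; f q].
Proof. by rewrite imsetU1 imset_set1. Qed.

Lemma imset_invol (T : finType) (f : T -> T) (V : {set T}) :
  involutive f -> (forall z, z \in V -> f z \in V) -> f @: V = V.
Proof.
move=> inv hV; apply/setP => z; apply/imsetP/idP.
  by case=> y yV ->; apply: hV.
by move=> zV; exists (f z); [apply: hV | rewrite inv].
Qed.

Lemma adjC (T : finType) (G : graph T) p q : adj G p q = adj G q p.
Proof. by rewrite /adj setUC. Qed.

Lemma simple_adj (T : finType) (G : graph T) p q :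
  simple G -> adj G p q -> [/\ p \in gV G, q \in gV G & p != q].
Proof.
move=> sG hpq; have [x [y [xV yV xy e]]] := sG _ hpq.
have pin : p \in [set x; y] by rewrite -e !inE eqxx.
have qin : q \in [set x; y] by rewrite -e !inE eqxx orbT.
split.
- by move: pin; rewrite !inE => /orP[] /eqP ->.
- by move: qin; rewrite !inE => /orP[] /eqP ->.
apply/negP => /eqP pq; move: e; rewrite pq setUid => e.
have := cards2 x y; rewrite -e cards1 xy //.
Qed.

Lemma L2 (T : finType) (H : graph T) (A B : {set T}) (v p q r : T) :
  simple H -> gV H = A :|: B :|: [set v] ->
  (independent H A \/ clique H A) -> complete_to H A B ->
  adj H p q -> p \in A -> q != v -> r \in A -> r != q -> adj H r q.
Proof.
move=> sH hV hAc hAB hpq pA qv rA rq.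
have [_ qV pq] := simple_adj sH hpq.
move: qV; rewrite hV !inE (negPf qv) orbF => /orP[qA|qB].
  case: hAc => [ind|cl]; last by apply: cl.
  by move: (ind p q pA qA pq); rewrite hpq.
by apply: hAB.
Qed.

Lemma sw_edge (T : finType) (H : graph T) (A B : {set T}) (v x m : T) :
  simple H -> gV H = A :|: B :|: [set v] ->
  (independent H A \/ clique H A) -> complete_to H A B ->
  x \in A -> m \in A -> ~~ adj H v m ->
  forall p q, adj H p q -> [set p; q] != [set v; x] ->
  adj H (sw x m p) (sw x m q).
Proof.
move=> sH hV hAc hAB xA mA nvm.
have swx : sw x m x = m by rewrite /sw eqxx.
have swm : sw x m m = x by rewrite /sw eqxx; case: eqVneq.
have swo z : z != x -> z != m -> sw x m z = z.
  by move=> zx zm; rewrite /sw (negPf zx) (negPf zm).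
have one p q : adj H p q -> [set p; q] != [set v; x] ->
    (p == x) || (p == m) -> q != x -> q != m -> adj H (sw x m p) (sw x m q).
  move=> hpq ne pxm qx qm; rewrite (swo q qx qm).
  have qv : q != v.
    apply/negP => /eqP qv; subst q.
    case/orP: pxm => /eqP pE; subst p.
      by move: ne; rewrite setUC eqxx.
    by move: nvm; rewrite adjC hpq.
  case/orP: pxm => /eqP pE; subst p.
    by rewrite swx; apply: (L2 sH hV hAc hAB hpq xA qv mA); rewrite eq_sym.
  by rewrite swm; apply: (L2 sH hV hAc hAB hpq mA qv xA); rewrite eq_sym.
move=> p q hpq ne.
have [_ _ pq] := simple_adj sH hpq.
case pin: ((p == x) || (p == m)); case qin: ((q == x) || (q == m)).
- move: pin qin pq hpq => /orP[]/eqP-> /orP[]/eqP->; rewrite ?eqxx //.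
    by rewrite swx swm adjC.
  by rewrite swx swm adjC.
- by move/negbT: qin; rewrite negb_or => /andP[qx qm]; apply: one.
- move/negbT: pin; rewrite negb_or => /andP[px pm].
  rewrite adjC; apply: one => //; first by rewrite adjC.
  by rewrite setUC.
- move/negbT: pin; rewrite negb_or => /andP[px pm].
  move/negbT: qin; rewrite negb_or => /andP[qx qm].
  by rewrite !swo.
Qed.

Theorem mainTheorem5 (T : finType) (H F : graph T) (A B : {set T}) (v : T) :
  simple H ->
  gV H = A :|: B :|: [set v] ->
  [disjoint A & B] -> v \notin A -> v \notin B ->
  (independent H A \/ clique H A) ->
  complete_to H A B ->
  (exists2 a, a \in A & adj H v a) ->
  (exists2 a, a \in A & ~~ adj H v a) ->
  gV F = gV H ->
  gE F \subset gE H ->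
  (forall e, e \in gE H -> e \notin gE F -> exists2 a, a \in A & e = [set v; a]) ->
  cap_reach H F.
Proof.
move=> sH hV _ vA _ hAc hAB _ [m mA nvm] hVF hEF hrem.
pose c x := [&& x \in A, [set v; x] \in gE H & [set v; x] \notin gE F].
pose g x := if c x then sw x m else id.
have ginv x : involutive (g x).
  by rewrite /g; case: (c x); [apply: sw_inv | ].
have AV z : z \in A -> z \in gV H by move=> zA; rewrite hV !inE zA.
have gV' x z : z \in gV H -> g x z \in gV H.
  rewrite /g; case cx: (c x) => // zV; case/and3P: cx => xA _ _.
  rewrite /sw; case: eqVneq => _; first exact: AV.
  by case: eqVneq => _ //; apply: AV.
pose a (i : 'I_#|T|.+1) := g (nth m (enum T) i).
exists #|T|, a; split; first by move=> i; apply: can_in_inj => z _; apply: ginv.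
split.
  rewrite hVF; apply/setP => z; apply/idP/bigcapP.
    by move=> zV i _; rewrite /= imset_invol //; [apply: ginv | move=> y; apply: gV'].
  by move=> /(_ ord_max isT); rewrite /= imset_invol //; [apply: ginv | move=> y; apply: gV'].
apply/setP => e; apply/idP/bigcapP.
- move=> eF i _; rewrite /gimage /=; set x := nth m (enum T) i.
  have eH : e \in gE H by apply: (subsetP hEF).
  rewrite /a -/x /g; case cx: (c x); last first.
    by apply/imsetP; exists e => //; rewrite imset_id.
  case/and3P: cx => xA _ nF.
  have [p [q [_ _ _ ep]]] := sH _ eH.
  apply/imsetP; exists [set sw x m p; sw x m q].
    apply: (sw_edge sH hV hAc hAB xA mA nvm); first by rewrite /adj -ep.
    by apply/eqP => E; move: nF; rewrite -E -ep eF.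
  by rewrite imset_set2 !sw_inv ep.
- move=> hall.
  have eH : e \in gE H.
    move: (hall ord_max isT); rewrite /= /a nth_default; last by rewrite -cardE.
    rewrite /g; have -> : c m = false by move: (negPf nvm); rewrite /c /adj => ->; rewrite andbF.
    by case/imsetP => e' e'H ->; rewrite imset_id.
  apply/negPn/negP => eF; have [x xA ex] := hrem e eH eF.
  have xT : x \in enum T by rewrite mem_enum.
  have ilt : index x (enum T) < #|T|.+1 by rewrite ltnS cardE index_size.
  move: (hall (Ordinal ilt) isT); rewrite /= /a nth_index //.
  have cx : c x by rewrite /c xA -ex eH eF.
  rewrite /g cx; case/imsetP => e' e'H ee'.
  have : e' = sw x m @: e by rewrite ee' -imset_comp (eq_imset _ (sw_inv x m)) imset_id.
  have vx : v != x by apply: contraNneq vA => ->.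
  have vm : v != m by apply: contraNneq vA => ->.
  rewrite ex imset_set2 {2}/sw eqxx {1}/sw (negPf vx) (negPf vm) => E.
  by move: nvm; rewrite /adj -E e'H.
Qed.
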